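(* For every statement $c$, $\mathit{synt\_step\_image\_closed}(\mathit{stmt\_to\_ta}\ c)$ holds.
   Context: Syntax. Values: $\mathit{val} ::= \mathit{Bool}\ b \mid \mathit{Null}$. Expressions: $\mathit{expr} ::= \mathit{Val}\ v \mid \mathit{Var}\ x$. Statements: $\mathit{stmt} ::= \mathit{Empty} \mid \mathit{Assign}\ x\ v \mid \mathit{Seq}\ c_1\ c_2 \mid \mathit{Cond}\ e\ c_1\ c_2 \mid \mathit{While}\ e\ c$. Statement paths: $\mathit{stmt\_path} ::= \mathit{PTop} \mid \mathit{PSeqLeft}\ sp\ c_2 \mid \mathit{PSeqRight}\ c_1\ sp \mid \mathit{PCondLeft}\ e\ sp\ c_2 \mid \mathit{PCondRight}\ e\ c_1\ sp \mid \mathit{PWhile}\ e\ sp$. A location is $\mathit{Loc}\ c\ sp$; a syntactic configuration is a pair (location, Boolean). $\mathit{all\_locations}\ c\ sp$: contains $\mathit{Loc}\ c\ sp$, plus for $c=\mathit{Seq}\ c_1\ c_2$ the elements of $\mathit{all\_locations}\ c_1\ (\mathit{PSeqLeft}\ sp\ c_2)$ and $\mathit{all\_locations}\ c_2\ (\mathit{PSeqRight}\ c_1\ sp)$; for $c=\mathit{Cond}\ e\ c_1\ c_2$ those of $\mathit{all\_locations}\ c_1\ (\mathit{PCondLeft}\ e\ sp\ c_2)$ and $\mathit{all\_locations}\ c_2\ (\mathit{PCondRight}\ e\ c_1\ sp)$; for $c=\mathit{While}\ e\ c'$ those of $\mathit{all\_locations}\ c'\ (\mathit{PWhile}\ e\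 sp)$; nothing else. $\mathit{nodes\_of\_stmt\_locations}$ maps a list of locations to the list of syntactic configurations $(l,\mathit{True})$ and $(l,\mathit{False})$ for all $l$ in it. Next location: $\mathit{next\_loc}\ c\ \mathit{PTop} = (\mathit{Loc}\ c\ \mathit{PTop}, \mathit{False})$; $\mathit{next\_loc}\ c\ (\mathit{PSeqLeft}\ sp\ c_2) = (\mathit{Loc}\ c_2\ (\mathit{PSeqRight}\ c\ sp), \mathit{True})$; $\mathit{next\_loc}\ c\ (\mathit{PSeqRight}\ c_1\ sp) = (\mathit{Loc}\ (\mathit{Seq}\ c_1\ c)\ sp, \mathit{False})$; $\mathit{next\_loc}\ c\ (\mathit{PCondLeft}\ e\ sp\ c_2) = (\mathit{Loc}\ (\mathit{Cond}\ e\ c\ c_2)\ sp, \mathit{False})$; $\mathit{next\_loc}\ c\ (\mathit{PCondRight}\ e\ c_1\ sp) = (\mathit{Loc}\ (\mathit{Cond}\ e\ c_1\ c)\ sp, \mathit{False})$; $\mathit{next\_loc}\ c\ (\mathit{PWhile}\ e\ sp) = (\mathit{Loc}\ (\mathit{While}\ e\ c)\ sp, \mathit{True})$. $\mathit{synt\_step\_image}$: $(\mathit{Loc}\ \mathit{Empty}\ sp,\mathit{True})\mapsto[(\mathit{Loc}\ \mathit{Empty}\ sp,\mathit{False})]$; $(\mathit{Loc}\ (\mathit{Assign}\ x\ v)\ sp,\mathit{True})\mapsto[(\mathit{Loc}\ (\mathit{Assign}\ x\ v)\ sp,\mathit{False})]$; $(\mathit{Loc}\ (\mathit{Seq}\ c_1\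 c_2)\ sp,\mathit{True})\mapsto[(\mathit{Loc}\ c_1\ (\mathit{PSeqLeft}\ sp\ c_2),\mathit{True})]$; $(\mathit{Loc}\ (\mathit{Cond}\ e\ c_1\ c_2)\ sp,\mathit{True})\mapsto[(\mathit{Loc}\ c_1\ (\mathit{PCondLeft}\ e\ sp\ c_2),\mathit{True}),(\mathit{Loc}\ c_2\ (\mathit{PCondRight}\ e\ c_1\ sp),\mathit{True})]$; $(\mathit{Loc}\ (\mathit{While}\ e\ c)\ sp,\mathit{True})\mapsto[(\mathit{Loc}\ c\ (\mathit{PWhile}\ e\ sp),\mathit{True}),(\mathit{Loc}\ (\mathit{While}\ e\ c)\ sp,\mathit{False})]$; $(\mathit{Loc}\ c\ sp,\mathit{False})\mapsto[\,]$ if $sp=\mathit{PTop}$, else $[\mathit{next\_loc}\ c\ sp]$. Automata: actions are $\mathit{NoAct}$ and $\mathit{AssAct}\ x\ v$; an edge is a record $(\mathit{source},\mathit{action},\mathit{dest})$; an automaton is a record with a node list $\mathit{nodes}$, an edge list $\mathit{edges}$ and an initial node $\mathit{init\_s}$. $\mathit{action\_of\_synt\_config}(\mathit{Loc}\ (\mathit{Assign}\ x\ v)\ sp,\mathit{True})=\mathit{AssAct}\ x\ v$, and $\mathit{NoAct}$ otherwise. For a node $n$, $\mathit{edge\_of\_synt\_config}\ n$ is the list of edges $(\mathit{source}=n,\mathit{action}=\mathit{action\_of\_synt\_config}\ n,\mathit{dest}=t)$ for $t\in\mathit{synt\_step\_image}\ n$; $\mathit{edges\_of\_nodes}\ nds$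 is the concatenation of $\mathit{edge\_of\_synt\_config}\ n$ over $n\in nds$. $\mathit{stmt\_to\_ta}\ c$ is the automaton with $\mathit{nodes}=nds:=\mathit{nodes\_of\_stmt\_locations}(\mathit{all\_locations}\ c\ \mathit{PTop})$, $\mathit{edges}=\mathit{edges\_of\_nodes}\ nds$, $\mathit{init\_s}=(\mathit{Loc}\ c\ \mathit{PTop},\mathit{True})$. $\mathit{synt\_step\_image\_closed}(\mathit{aut})$ means: for every node $n\in\mathit{nodes}(\mathit{aut})$ and every $t\in\mathit{synt\_step\_image}\ n$, both $t\in\mathit{nodes}(\mathit{aut})$ and the edge $(\mathit{source}=n,\mathit{action}=\mathit{action\_of\_synt\_config}\ n,\mathit{dest}=t)\in\mathit{edges}(\mathit{aut})$. *)

(* Defs.v *)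
From Stdlib Require Import List Bool.
Import ListNotations.

Definition var := nat.

Inductive val : Type := Bool (b : bool) | Null.
Inductive expr : Type := Val (v : val) | Var (x : var).

Inductive stmt : Type :=
| Empty
| Assign (x : var) (v : val)
| Seq (c1 c2 : stmt)
| Cond (e : expr) (c1 c2 : stmt)
| While (e : expr) (c : stmt).

Inductive stmt_path : Type :=
| PTop
| PSeqLeft (sp : stmt_path) (c2 : stmt)
| PSeqRight (c1 : stmt) (sp : stmt_path)
| PCondLeft (e : expr) (sp : stmt_path) (c2 : stmt)
| PCondRight (e : expr) (c1 : stmt) (sp : stmt_path)
| PWhile (e : expr) (sp : stmt_path).

Inductive location : Type := Loc (c : stmt) (sp : stmt_path).

Definition synt_config : Type := (location * bool)%type.

Fixpoint all_locations (c : stmt) (sp : stmt_path) : list location :=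
  Loc c sp ::
  match c with
  | Seq c1 c2 => all_locations c1 (PSeqLeft sp c2) ++ all_locations c2 (PSeqRight c1 sp)
  | Cond e c1 c2 => all_locations c1 (PCondLeft e sp c2) ++ all_locations c2 (PCondRight e c1 sp)
  | While e c' => all_locations c' (PWhile e sp)
  | _ => []
  end.

Definition nodes_of_stmt_locations (ls : list location) : list synt_config :=
  flat_map (fun l => [(l, true); (l, false)]) ls.

Definition next_loc (c : stmt) (sp : stmt_path) : synt_config :=
  match sp with
  | PTop => (Loc c PTop, false)
  | PSeqLeft sp' c2 => (Loc c2 (PSeqRight c sp'), true)
  | PSeqRight c1 sp' => (Loc (Seq c1 c) sp', false)
  | PCondLeft e sp' c2 => (Loc (Cond e c c2) sp', false)
  | PCondRight e c1 sp' => (Loc (Cond e c1 c) sp', false)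
  | PWhile e sp' => (Loc (While e c) sp', true)
  end.

Definition synt_step_image (n : synt_config) : list synt_config :=
  match n with
  | (Loc Empty sp, true) => [(Loc Empty sp, false)]
  | (Loc (Assign x v) sp, true) => [(Loc (Assign x v) sp, false)]
  | (Loc (Seq c1 c2) sp, true) => [(Loc c1 (PSeqLeft sp c2), true)]
  | (Loc (Cond e c1 c2) sp, true) =>
      [(Loc c1 (PCondLeft e sp c2), true); (Loc c2 (PCondRight e c1 sp), true)]
  | (Loc (While e c) sp, true) =>
      [(Loc c (PWhile e sp), true); (Loc (While e c) sp, false)]
  | (Loc c sp, false) =>
      match sp with PTop => [] | _ => [next_loc c sp] end
  end.

Inductive action : Type := NoAct | AssAct (x : var) (v : val).

Record edge : Type := mkEdge { source : synt_config; act : action; dest : synt_config }.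

Record automaton : Type :=
  mkAut { nodes : list synt_config; edges : list edge; init_s : synt_config }.

Definition action_of_synt_config (n : synt_config) : action :=
  match n with
  | (Loc (Assign x v) _, true) => AssAct x v
  | _ => NoAct
  end.

Definition edge_of_synt_config (n : synt_config) : list edge :=
  map (fun t => mkEdge n (action_of_synt_config n) t) (synt_step_image n).

Definition edges_of_nodes (nds : list synt_config) : list edge :=
  flat_map edge_of_synt_config nds.

Definition stmt_to_ta (c : stmt) : automaton :=
  let nds := nodes_of_stmt_locations (all_locations c PTop) in
  mkAut nds (edges_of_nodes nds) (Loc c PTop, true).

Definition synt_step_image_closed (aut : automaton) : Prop :=
  forall n, In n (nodes aut) ->
  forall t, In t (synt_step_image n) ->
    In t (nodes aut) /\
    In (mkEdge n (action_of_synt_config n) t) (edges aut).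

(* Main.v *)
Require Import Defs.
From Stdlib Require Import List.
Import ListNotations.

Definition parent (c : stmt) (sp : stmt_path) : option location :=
  match sp with
  | PTop => None
  | PSeqLeft sp' c2 => Some (Loc (Seq c c2) sp')
  | PSeqRight c1 sp' => Some (Loc (Seq c1 c) sp')
  | PCondLeft e sp' c2 => Some (Loc (Cond e c c2) sp')
  | PCondRight e c1 sp' => Some (Loc (Cond e c1 c) sp')
  | PWhile e sp' => Some (Loc (While e c) sp')
  end.

Lemma sub_trans : forall c sp c' sp', In (Loc c' sp') (all_locations c sp) ->
  incl (all_locations c' sp') (all_locations c sp).
Proof.
  induction c; intros sp c' sp' H; simpl in H; destruct H as [H|H];
    try (inversion H; subst; apply incl_refl); try contradiction.
  - apply in_app_or in H; destruct H as [H|H];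
      [apply IHc1 in H | apply IHc2 in H]; intros x Hx; apply H in Hx; simpl; right;
      apply in_or_app; auto.
  - apply in_app_or in H; destruct H as [H|H];
      [apply IHc1 in H | apply IHc2 in H]; intros x Hx; apply H in Hx; simpl; right;
      apply in_or_app; auto.
  - apply IHc in H; intros x Hx; apply H in Hx; simpl; right; auto.
Qed.

Lemma parent_in : forall c sp c' sp', In (Loc c' sp') (all_locations c sp) ->
  (c' = c /\ sp' = sp) \/ exists p, parent c' sp' = Some p /\ In p (all_locations c sp).
Proof.
  induction c; intros sp c' sp' H; simpl in H; destruct H as [H|H];
    try (inversion H; subst; left; auto); try contradiction; right.
  - apply in_app_or in H; destruct H as [H|H].
    + destruct (IHc1 _ _ _ H) as [[-> ->]|[p [Hp Hi]]].
      * eexists; split; [reflexivity| simpl; auto].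
      * exists p; split; auto; simpl; right; apply in_or_app; auto.
    + destruct (IHc2 _ _ _ H) as [[-> ->]|[p [Hp Hi]]].
      * eexists; split; [reflexivity| simpl; auto].
      * exists p; split; auto; simpl; right; apply in_or_app; auto.
  - apply in_app_or in H; destruct H as [H|H].
    + destruct (IHc1 _ _ _ H) as [[-> ->]|[p [Hp Hi]]].
      * eexists; split; [reflexivity| simpl; auto].
      * exists p; split; auto; simpl; right; apply in_or_app; auto.
    + destruct (IHc2 _ _ _ H) as [[-> ->]|[p [Hp Hi]]].
      * eexists; split; [reflexivity| simpl; auto].
      * exists p; split; auto; simpl; right; apply in_or_app; auto.
  - destruct (IHc _ _ _ H) as [[-> ->]|[p [Hp Hi]]].
    + eexists; split; [reflexivity| simpl; auto].
    + exists p; split; auto; simpl; right; auto.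
Qed.

Lemma in_nodes : forall l b ls, In (l, b) (nodes_of_stmt_locations ls) <-> In l ls.
Proof.
  intros l b ls; unfold nodes_of_stmt_locations; rewrite in_flat_map; split.
  - intros [x [Hx Hin]]; simpl in Hin; destruct Hin as [H|[H|[]]]; inversion H; subst; auto.
  - intros H; exists l; split; auto; destruct b; simpl; auto.
Qed.

Lemma self_in : forall c sp, In (Loc c sp) (all_locations c sp).
Proof. destruct c; simpl; auto. Qed.
Hint Resolve self_in : core.

Lemma node_closed : forall c l b t, In l (all_locations c PTop) ->
  In t (synt_step_image (l, b)) -> In (fst t) (all_locations c PTop).
Proof.
  intros c [c' sp] b t Hl Ht.
  assert (Hsub := sub_trans _ _ _ _ Hl).
  assert (Hpar : forall p, parent c' sp = Some p -> In p (all_locations c PTop)).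
  { intros p Hp. destruct (parent_in _ _ _ _ Hl) as [[_ ->]|[p' [Hp' Hi]]].
    - discriminate. - rewrite Hp in Hp'; inversion Hp'; subst; auto. }
  destruct b.
  - destruct c'; simpl in Ht.
    + destruct Ht as [<-|[]]; apply Hsub; simpl; auto.
    + destruct Ht as [<-|[]]; apply Hsub; simpl; auto.
    + destruct Ht as [<-|[]]; apply Hsub; simpl; right; apply in_or_app; left; simpl; auto.
    + destruct Ht as [<-|[<-|[]]]; apply Hsub; simpl; right; apply in_or_app;
        [left|right]; simpl; auto.
    + destruct Ht as [<-|[<-|[]]]; apply Hsub; simpl; auto.
  - assert (Ht' : sp <> PTop /\ t = next_loc c' sp).
    { destruct c'; simpl in Ht; try (destruct sp; simpl in Ht;
        [contradiction | destruct Ht as [Ht|[]]; split; [discriminate|auto] ..]). }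
    destruct Ht' as [Hne ->].
    destruct sp; simpl; try (exfalso; apply Hne; reflexivity);
      try (apply Hpar; reflexivity).
    assert (H1 := Hpar _ eq_refl). apply (sub_trans _ _ _ _ H1). simpl; right.
    apply in_or_app; right; simpl; auto.
Qed.

Theorem lemma3 : forall c : stmt, synt_step_image_closed (stmt_to_ta c).
Proof.
  intros c n Hn t Ht; simpl in *.
  split.
  - destruct n as [l b]. apply in_nodes in Hn. destruct t as [l' b'].
    apply in_nodes. apply (node_closed c l b (l', b')); auto.
  - unfold edges_of_nodes. apply in_flat_map. exists n; split; auto.
    unfold edge_of_synt_config. apply in_map_iff. exists t; auto.
Qed.
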